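(* Let the filtered space be as in the context, let $w$ be a weight with $[w]_{A_2}:=\sup_{I\in\mathscr D}\langle w\rangle_I\langle w^{-1}\rangle_I<\infty$, and put $u=w^{-1}$. For $I\in\mathscr D$ let $$\rho_I=\sum_{I'\in\operatorname{ch}(I)}|\langle u\rangle_{I'}-\langle u\rangle_I|\cdot|\langle w\rangle_{I'}-\langle w\rangle_I|\cdot|I'|/|I| .$$ Then for all $I_0\in\mathscr D$ $$\sum_{I\in\mathscr D:\,I\subset I_0}\rho_I|I|\le C[w]_{A_2}|I_0|,$$ with an absolute constant $C$.
   Context: $(\mathcal X,\mathfrak S,\nu)$ is a $\sigma$-finite measure space with a filtration $(\mathfrak S_n)_{n\in\mathbb Z}$, $\mathfrak S_n\subset\mathfrak S_{n+1}$, each atomic with countable disjoint family $\mathscr D_n$ of atoms of positive $\nu$-measure; $\mathscr D=\bigcup_n\mathscr D_n$ (no atom lies in all $\mathscr D_n$). $|I|=\nu(I)$, $\langle f\rangle_I=|I|^{-1}\int_I f\,d\nu$. For $I\in\mathscr D$, $\operatorname{rk}_+(I)=\sup\{n:I\in\mathscr D_n\}$ and $\operatorname{ch}(I)$ is the set of $I'\in\mathscr D_{\operatorname{rk}_+(I)+1}$ with $I'\subset I$ ($\operatorname{ch}(I)=\{I\}$ if $\operatorname{rk}_+(I)=\infty$). A weight is $w\ge0$ with $w\in L^1(I,\nu)$ for all $I\in\mathscr D$. *)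

(* Defs.v *)
From HB Require Import structures.
From mathcomp Require Import all_boot all_order all_algebra.
From mathcomp Require Import all_classical all_reals all_analysis.
Set Implicit Arguments. Unset Strict Implicit. Unset Printing Implicit Defensive.
Import Order.TTheory GRing.Theory Num.Theory.
Import numFieldNormedType.Exports.
Local Open Scope classical_set_scope.
Local Open Scope ring_scope.

(* A filtration (S_n)_{n in Z} of atomic sub-sigma-algebras, each S_n given by
   its countable family D n of atoms (a countable partition of the space into
   measurable sets of positive finite measure). S_n ⊂ S_{n+1} is expressed as
   "every atom of D (n+1) lies inside an atom of D n". *)
Definition is_filtration d (T : measurableType d) (R : realType)
    (mu : {measure set T -> \bar R}) (D : int -> set (set T)) : Prop :=
  [/\ (forall n, countable (D n)),
      (forall n I, D n I -> [/\ measurable I, (0 < mu I)%E & (mu I < +oo)%E]),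
      (forall n I J, D n I -> D n J -> I <> J -> I `&` J = set0),
      (forall n, \bigcup_(I in D n) I = setT)
    & (forall n J, D (n + 1) J -> exists I, D n I /\ J `<=` I)]
  /\ (forall I, ~ (forall n, D n I)).

Definition atoms T (D : int -> set (set T)) : set (set T) :=
  [set I | exists n, D n I].

Definition children T (D : int -> set (set T)) (I : set T) : set (set T) :=
  [set J | exists n, [/\ D n I, (forall m, n < m -> ~ D m I),
                         D (n + 1) J & J `<=` I]]
  `|` [set J | J = I /\ (forall n, exists m, n < m /\ D m I)].

Definition avg d (T : measurableType d) (R : realType)
    (mu : {measure set T -> \bar R}) (f : T -> \bar R) (I : set T) : R :=
  fine (\int[mu]_(x in I) f x) / fine (mu I).

Definition invw T (R : realType) (w : T -> R) : T -> \bar R :=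
  fun x => if 0 < w x then ((w x)^-1)%:E else (+oo)%E.

Definition is_weight d (T : measurableType d) (R : realType)
    (mu : {measure set T -> \bar R}) (D : int -> set (set T)) (w : T -> R) :=
  (forall x, 0 <= w x) /\
  (forall I, atoms D I -> mu.-integrable I (EFin \o w)).

Definition A2 d (T : measurableType d) (R : realType)
    (mu : {measure set T -> \bar R}) (D : int -> set (set T)) (w : T -> R)
    : \bar R :=
  ereal_sup [set ((avg mu (EFin \o w) I) * (avg mu (invw w) I))%:E
            | I in atoms D].

Definition rho d (T : measurableType d) (R : realType)
    (mu : {measure set T -> \bar R}) (D : int -> set (set T)) (w : T -> R)
    (I : set T) : \bar R :=
  (\esum_(J in children D I)
     (`|avg mu (invw w) J - avg mu (invw w) I|
      * `|avg mu (EFin \o w) J - avg mu (EFin \o w) I|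
      * fine (mu J) / fine (mu I))%:E)%E.

(* Main.v *)
Require Import Defs.
From HB Require Import structures.
From mathcomp Require Import all_boot all_order all_algebra.
From mathcomp Require Import all_classical all_reals all_analysis.
From mathcomp Require Import ring lra zify.
From mathcomp Require Import measurable_realfun.
Import Order.TTheory GRing.Theory Num.Theory.
Import numFieldNormedType.Exports.
Set Implicit Arguments. Unset Strict Implicit. Unset Printing Implicit Defensive.
Local Open Scope classical_set_scope.
Local Open Scope ring_scope.

Lemma opp_case (R : realType) (p q p' q' : R) : 0 <= p -> 0 <= q -> 0 <= p' -> 0 <= q' ->
  p <= p' -> q' <= q ->
  (p'^+2 - p^+2) * (q^+2 - q'^+2) <= 8 * (q * p' - p * q')^+2.
Proof.
move=> hp hq hp' hq' h1 h2.
set e := p' - p; set f := q - q'.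
have -> : p' = p + e by rewrite /e; ring.
have -> : q' = q - f by rewrite /f; ring.
have he : 0 <= e by rewrite /e; lra.
have hf : 0 <= f by rewrite /f; lra.
have hfq : f <= q by rewrite /f; lra.
have k1 : 4 * (q*e) * (p*f) <= (q*e + p*f)^+2.
  have -> : (q*e + p*f)^+2 = 4 * (q*e) * (p*f) + (q*e - p*f)^+2 by ring.
  have := sqr_ge0 (q*e - p*f); lra.
have k2 : q * e^+2 * f <= (q*e + p*f)^+2.
  have : 0 <= q * e^+2 * (q - f) by apply: mulr_ge0; [apply: mulr_ge0 => //; exact: sqr_ge0|lra].
  have hpf : 0 <= p*f by exact: mulr_ge0.
  have hqe : 0 <= q*e by exact: mulr_ge0.
  have : 0 <= (p*f) * (2 * (q * e) + p*f) by apply: mulr_ge0 => //; lra.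
  have -> : (q*e+p*f)^+2 = q^+2 * e^+2 + (p*f) * (2 * (q * e) + p*f) by ring.
  have -> : q * e^+2 * (q - f) = q^+2 * e^+2 - q * e^+2 * f by ring.
  lra.
have -> : ((p + e) ^+ 2 - p ^+ 2) * (q ^+ 2 - (q - f) ^+ 2) = 4*(q*e)*(p*f) + 2 * (q * e^+2 * f) - 2 * p * e * (f^+2) - e^+2*(f^+2) by ring.
have -> : q * (p + e) - p * (q - f) = q*e + p*f by ring.
have : 0 <= p * e * (f^+2) by apply: mulr_ge0; [exact: mulr_ge0|exact: sqr_ge0].
have : 0 <= e^+2*(f^+2) by apply: mulr_ge0; exact: sqr_ge0.
have := sqr_ge0 (q*e+p*f); lra.
Qed.

Lemma core (R : realType) (p q p' q' : R) : 0 <= p -> 0 <= q -> 0 <= p' -> 0 <= q' ->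
  `|p'^+2 - p^+2| * `|q'^+2 - q^+2| - (p'^+2 - p^+2) * (q'^+2 - q^+2)
   <= 16 * (q * p' - p * q')^+2.
Proof.
move=> hp hq hp' hq'.
have hs := sqr_ge0 (q * p' - p * q').
have [ha|ha] := lerP 0 (p'^+2 - p^+2); have [hb|hb] := lerP 0 (q'^+2 - q^+2).
- rewrite (ger0_norm ha) (ger0_norm hb) subrr; lra.
- rewrite (ger0_norm ha) (ltr0_norm hb).
  have hpp : p <= p' by rewrite -(ler_pXn2r (n:=2)) ?nnegrE //; lra.
  have hqq : q' <= q by rewrite -(ler_pXn2r (n:=2)) ?nnegrE //; lra.
  have := opp_case hp hq hp' hq' hpp hqq; lra.
- rewrite (ltr0_norm ha) (ger0_norm hb).
  have hpp : p' <= p by rewrite -(ler_pXn2r (n:=2)) ?nnegrE //; lra.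
  have hqq : q <= q' by rewrite -(ler_pXn2r (n:=2)) ?nnegrE //; lra.
  have := opp_case hq hp hq' hp' hqq hpp.
  have -> : (p * q' - q * p') ^+ 2 = (q * p' - p * q')^+2 by ring.
  lra.
- rewrite (ltr0_norm ha) (ltr0_norm hb); lra.
Qed.

Definition Bf (R : realType) (Q x y : R) := Q - x * y + 32 * Num.sqrt Q * Num.sqrt (x * y).

Lemma child_ineq (R : realType) (Q x y : R) : 0 <= x -> 0 <= y -> x * y <= Q ->
  exists al be : R, [/\ 0 <= al, 0 <= be & forall x' y', 0 <= x' -> 0 <= y' ->
    (x = 0 -> x' = 0) -> (y = 0 -> y' = 0) ->
    `|x' - x| * `|y' - y| + Bf Q x' y' + al * x + be * y <= Bf Q x y + al * x' + be * y'].
Proof.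
move=> hx hy hQ.
have [x0|xpos] := eqVneq x 0.
  exists 0, 0; split => // x' y' _ _ /(_ x0) -> _.
  by rewrite x0 /Bf !mul0r subr0 normr0 mul0r add0r sqrtr0 mulr0 !addr0.
have [y0|ypos] := eqVneq y 0.
  exists 0, 0; split => // x' y' _ _ _ /(_ y0) ->.
  by rewrite y0 /Bf !mulr0 subr0 normr0 mulr0 add0r sqrtr0 mulr0 !addr0 !mul0r.
set p := Num.sqrt x; set q := Num.sqrt y.
have hp : 0 < p by rewrite sqrtr_gt0 lt0r xpos.
have hq : 0 < q by rewrite sqrtr_gt0 lt0r ypos.
have xE : x = p ^+ 2 by rewrite sqr_sqrtr.
have yE : y = q ^+ 2 by rewrite sqr_sqrtr.
set S := Num.sqrt Q.
have hS : p * q <= S by rewrite -sqrtrM // ler_wsqrtr.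
set K := 32 * S.
exists (- y + K * q / (2 * p)), (- x + K * p / (2 * q)); split.
- have h2 : 0 < 2 * p by lra.
  have : 16 * q ^+ 2 <= K * q / (2 * p).
    rewrite ler_pdivlMr //; rewrite /K; nra.
  have : 0 <= q^+2 by exact: sqr_ge0.
  rewrite yE; lra.
- have h2 : 0 < 2 * q by lra.
  have : 16 * p ^+ 2 <= K * p / (2 * q).
    rewrite ler_pdivlMr //; rewrite /K; nra.
  have : 0 <= p^+2 by exact: sqr_ge0.
  rewrite xE; lra.
move=> x' y' hx' hy' _ _.
set p' := Num.sqrt x'; set q' := Num.sqrt y'.
have x'E : x' = p' ^+ 2 by rewrite sqr_sqrtr.
have y'E : y' = q' ^+ 2 by rewrite sqr_sqrtr.
have hp' : 0 <= p' by exact: sqrtr_ge0.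
have hq' : 0 <= q' by exact: sqrtr_ge0.
have sE : Num.sqrt (x * y) = p * q by rewrite sqrtrM.
have s'E : Num.sqrt (x' * y') = p' * q' by rewrite sqrtrM.
rewrite /Bf -/S sE s'E -/K.
have key : K * (p' * q') = K * (p * q) + (K * q / (2 * p)) * (x' - x) + (K * p / (2 * q)) * (y' - y)
   - K * (q * p' - p * q')^+2 / (2 * p * q).
  rewrite x'E y'E xE yE; field; lra.
have hc := core (ltW hp) (ltW hq) hp' hq'.
rewrite -x'E -y'E -xE -yE in hc.
have : 16 * (q * p' - p * q')^+2 <= K * (q * p' - p * q')^+2 / (2 * p * q).
  have h2 : 0 < 2 * p * q by rewrite mulr_gt0 // mulr_gt0.
  rewrite ler_pdivlMr //; rewrite /K; have := sqr_ge0 (q * p' - p * q'); nra.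
rewrite key.
have e : x' * y' = x * y + y * (x' - x) + x * (y' - y) + (x' - x) * (y' - y) by ring.
rewrite e; lra.
Qed.
Local Open Scope ereal_scope.
Lemma esum_partition (R : realType) (T : Type) (P : set (set T))
    (phi : set T -> \bar R) :
  countable P -> (forall A B, P A -> P B -> A <> B -> A `&` B = set0) ->
  phi set0 = 0 -> (forall A, P A -> 0 <= phi A) ->
  (forall e : nat -> set T, (forall n, P (e n) \/ e n = set0) -> trivIset setT e ->
     phi (\bigcup_n e n) = \sum_(n <oo) phi (e n)) ->
  phi (\bigcup_(A in P) A) = \esum_(A in P) phi A.
Proof.
move=> /countable_injP[f finj] disj phi0 phige0 add.
pose e n := xget set0 [set A | P A /\ f A = n].
have eP n : P (e n) /\ f (e n) = n \/ e n = set0.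
  rewrite /e; case: xgetP => [A -> HA|_]; [by left|by right].
have efA A : P A -> e (f A) = A.
  move=> PA; rewrite /e; case: xgetP => [B _ [PB fB]|NP].
    exact: (finj B A (mem_set PB) (mem_set PA) fB).
  by exfalso; apply: (NP A).
have triv : trivIset setT e.
  move=> i j _ _ [x [xi xj]].
  have [[Pi fi]|i0] := eP i; last by rewrite i0 in xi.
  have [[Pj fj]|j0] := eP j; last by rewrite j0 in xj.
  have [eij|nij] := pselect (e i = e j); first by rewrite -fi -fj eij.
  have := disj _ _ Pi Pj nij.
  by move=> /seteqP[+ _] => /(_ x (conj xi xj)).
have U : \bigcup_(A in P) A = \bigcup_n e n.
  apply/seteqP; split => x.
    by move=> [A PA Ax]; exists (f A) => //; rewrite efA.
  move=> [n _ xn]; have [[Pn _]|n0] := eP n; last by rewrite n0 in xn.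
  by exists (e n).
have epos n : 0 <= phi (e n).
  by have [[Pn _]|->] := eP n; [exact: phige0|rewrite phi0].
rewrite U add //; last by move=> n; have [[]|] := eP n; [left|right].
rewrite nneseries_esumT //.
have finj' : set_inj P f.
  exact: finj.
rewrite -[RHS](eq_esum (fun A (PA : P A) => congr1 phi (efA A PA))).
rewrite -(esum_image P f (fun n => phi (e n))) //.
rewrite [RHS]esum_mkcond; apply: eq_esum => n _.
case: ifPn => // /negP; rewrite inE => nP.
have [[Pn fn]|->] := eP n; last by rewrite phi0.
by exfalso; apply: nP; exists (e n).
Qed.
Lemma esumZ (R : realType) (T : choiceType) (I : set T) (a : T -> \bar R) (r : R) :
  (0 < r)%R -> (forall i, I i -> 0 <= a i) ->
  \esum_(i in I) (r%:E * a i) = r%:E * \esum_(i in I) a i.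
Proof.
move=> r0 a0; rewrite /esum -ereal_sup_pZl //; congr ereal_sup.
have H A : fsets I A -> \sum_(i \in A) r%:E * a i = r%:E * \sum_(i \in A) a i.
  move=> [finA AI]; rewrite !fsbig_finite // !big_seq ge0_sume_distrr //.
  by move=> i; rewrite in_fset_set // inE => /AI /a0.
apply/seteqP; split => x /=.
  by move=> [A hA <-]; exists (\sum_(i \in A) a i); [exists A|rewrite H].
by move=> [y [A hA <-] <-]; exists A => //; rewrite H.
Qed.

Lemma esum_le_subset (R : realType) (T : choiceType) (A B : set T) (a : T -> \bar R) :
  A `<=` B -> (forall i, B i -> 0 <= a i) ->
  \esum_(i in A) a i <= \esum_(i in B) a i.
Proof.
move=> AB a0; rewrite esum_mkcond [X in _ <= X]esum_mkcond.
apply: le_esum => i _; case: ifPn => iA; case: ifPn => iB //.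
- by exfalso; move/negP: iB; apply; rewrite inE; apply: AB; rewrite -inE.
- by apply: a0; move: iB; rewrite inE.
Qed.
Definition top T (D : int -> set (set T)) (m : int) (I : set T) :=
  D m I /\ forall k, (m < k)%R -> ~ D k I.

Lemma Dne d (T : measurableType d) (R : realType) (mu : {measure set T -> \bar R})
  (D : int -> set (set T)) : is_filtration mu D -> forall n I, D n I -> exists x, I x.
Proof.
move=> [[_ hpos _ _ _] _] n I /hpos [_ h _].
apply/set0P/negP => /eqP I0; by rewrite I0 measure0 ltxx in h.
Qed.

Lemma nest_iter d (T : measurableType d) (R : realType) (mu : {measure set T -> \bar R})
  (D : int -> set (set T)) : is_filtration mu D ->
  forall n (k : nat) J, D (n + k%:Z)%R J -> exists I, D n I /\ J `<=` I.
Proof.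
move=> [[_ _ _ _ hn] _] n; elim => [|k IH] J.
  rewrite addr0 => DJ; exists J; split; [exact: DJ|exact: subset_refl].
have -> : (n + k.+1%:Z = (n + k%:Z) + 1)%R by rewrite -addrA -[in LHS](addn1 k) PoszD.
move=> /hn [K [DK JK]]; have [I [DI KI]] := IH _ DK.
by exists I; split => //; apply: subset_trans KI.
Qed.

Lemma nest_le d (T : measurableType d) (R : realType) (mu : {measure set T -> \bar R})
  (D : int -> set (set T)) : is_filtration mu D ->
  forall n m J, (n <= m)%R -> D m J -> exists I, D n I /\ J `<=` I.
Proof.
move=> hF n m J nm DJ; apply: (nest_iter hF (k := `|m - n|%N)).
have -> : (n + `|m - n|%N%:Z = m)%R by lia.
by [].
Qed.

Lemma same_atom d (T : measurableType d) (R : realType) (mu : {measure set T -> \bar R})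
  (D : int -> set (set T)) : is_filtration mu D ->
  forall n I K x, D n I -> D n K -> I x -> K x -> I = K.
Proof.
move=> [[_ _ hd _ _] _] n I K x DI DK Ix Kx.
apply: contrapT => IK; have := hd _ _ _ DI DK IK.
by move=> /seteqP[+ _] => /(_ x (conj Ix Kx)).
Qed.

Lemma meet_sub d (T : measurableType d) (R : realType) (mu : {measure set T -> \bar R})
  (D : int -> set (set T)) : is_filtration mu D ->
  forall m k I J x, (m <= k)%R -> D m I -> D k J -> I x -> J x -> J `<=` I.
Proof.
move=> hF m k I J x mk DI DJ Ix Jx.
have [K [DK JK]] := nest_le hF mk DJ.
by rewrite (same_atom hF DI DK Ix (JK _ Jx)).
Qed.

Lemma contig d (T : measurableType d) (R : realType) (mu : {measure set T -> \bar R})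
  (D : int -> set (set T)) : is_filtration mu D ->
  forall m j k I, (m <= j)%R -> (j <= k)%R -> D m I -> D k I -> D j I.
Proof.
move=> hF m j k I mj jk DmI DkI.
have [x Ix] := Dne hF DkI.
have [K [DK IK]] := nest_le hF jk DkI.
have KI := meet_sub hF mj DmI DK Ix (IK _ Ix).
by have -> : I = K by apply/seteqP; split.
Qed.

Lemma top_or_inf d (T : measurableType d) (R : realType) (mu : {measure set T -> \bar R})
  (D : int -> set (set T)) : is_filtration mu D ->
  forall I, atoms D I ->
  (forall n, exists m, (n < m)%R /\ D m I) \/ exists m, top D m I.
Proof.
move=> hF I [n1 Dn1].
have [inf|] := pselect (forall n, exists m, (n < m)%R /\ D m I); first by left.
move=> /existsNP [n hn]; right.
have nb : forall m, (n < m)%R -> ~ D m I.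
  by move=> m nm Dm; apply: hn; exists m.
have n1n : (n1 <= n)%R.
  by rewrite leNgt; apply/negP => /nb.
suff H : forall j : nat, D (n - j%:Z)%R I -> exists m, top D m I.
  apply: (H `|n - n1|%N); rewrite gez0_abs ?subr_ge0 //.
  by have -> : (n - (n - n1) = n1)%R by rewrite opprB addrC subrK.
elim => [|j IH].
  rewrite subr0 => Dn; exists n; split => // k nk; exact: nb.
move=> Dj.
have [Dj'|nDj'] := pselect (D (n - j%:Z)%R I); first exact: IH.
exists (n - j.+1%:Z)%R; split => // k kj Dk.
have [nk|kn] := ltrP n k; first exact: (nb k nk).
apply: nDj'; apply: (contig hF (m := (n - j.+1%:Z)%R) (k := k)) => //.
- lia.
- lia.
Qed.

Lemma top_uniq T (D : int -> set (set T)) m m' I : top D m I -> top D m' I -> m = m'.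
Proof.
move=> [Dm hm] [Dm' hm'].
have [mm'|m'm|//] := ltgtP m m'; [by case: (hm _ mm')|by case: (hm' _ m'm)].
Qed.

Lemma children_top d (T : measurableType d) (R : realType) (mu : {measure set T -> \bar R})
  (D : int -> set (set T)) : is_filtration mu D ->
  forall m I, top D m I -> children D I = [set J | D (m + 1)%R J /\ J `<=` I].
Proof.
move=> hF m I tI; apply/seteqP; split => J.
- case=> [[n [Dn hn DJ JI]]|[_ hinf]].
  + have <- : n = m by apply: (top_uniq (D := D) (I := I)).
    by [].
  + by have [k [mk Dk]] := hinf m; case: tI => _ /(_ k mk).
- move=> [DJ JI]; left; exists m; case: tI => Dm hm; split => //.
Qed.

Lemma children_inf T (D : int -> set (set T)) I :
  (forall n, exists m, (n < m)%R /\ D m I) -> children D I = [set I].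
Proof.
move=> hinf; apply/seteqP; split => J.
- case=> [[n [Dn hn DJ JI]]|[-> _]] //.
  by have [k [nk Dk]] := hinf n; case: (hn _ nk).
- by move=> ->; right.
Qed.

Definition sub_atoms T (D : int -> set (set T)) m I :=
  [set J | D (m + 1)%R J /\ J `<=` I].

Lemma sub_atoms_cover d (T : measurableType d) (R : realType) (mu : {measure set T -> \bar R})
  (D : int -> set (set T)) : is_filtration mu D ->
  forall m I, D m I -> \bigcup_(J in sub_atoms D m I) J = I.
Proof.
move=> hF m I DI; apply/seteqP; split => x.
  by move=> [J [_ JI] Jx]; exact: JI.
move=> Ix; case: (hF) => [[_ _ _ hc _] _].
have : (\bigcup_(J in D (m + 1)%R) J) x by rewrite hc.
move=> [J DJ Jx]; exists J => //; split => //.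
by apply: (meet_sub hF _ DI DJ Ix Jx); lia.
Qed.

Lemma sub_atoms_countable d (T : measurableType d) (R : realType) (mu : {measure set T -> \bar R})
  (D : int -> set (set T)) : is_filtration mu D ->
  forall m I, countable (sub_atoms D m I).
Proof.
move=> [[hc _ _ _ _] _] m I; apply: (sub_countable _ (hc (m + 1)%R)).
by apply: subset_card_le => J [DJ _].
Qed.

Lemma sub_atoms_disj d (T : measurableType d) (R : realType) (mu : {measure set T -> \bar R})
  (D : int -> set (set T)) : is_filtration mu D ->
  forall m I A B, sub_atoms D m I A -> sub_atoms D m I B -> A <> B -> A `&` B = set0.
Proof. by move=> [[_ _ hd _ _] _] m I A B [DA _] [DB _]; exact: (hd _ _ _ DA DB). Qed.

Lemma sub_atoms_meas d (T : measurableType d) (R : realType) (mu : {measure set T -> \bar R})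
  (D : int -> set (set T)) : is_filtration mu D ->
  forall n I, D n I -> measurable I.
Proof. by move=> [[_ hp _ _ _] _] n I /hp []. Qed.

Lemma mu_part d (T : measurableType d) (R : realType) (mu : {measure set T -> \bar R})
  (D : int -> set (set T)) : is_filtration mu D ->
  forall m I, D m I -> mu I = \esum_(J in sub_atoms D m I) mu J.
Proof.
move=> hF m I DI.
rewrite -{1}(sub_atoms_cover hF DI).
apply: esum_partition.
- exact: sub_atoms_countable hF m I.
- exact: sub_atoms_disj hF m I.
- exact: measure0.
- by move=> A _.
move=> e he te; apply: measure_semi_bigcup => //.
  by move=> n; have [[DA _]|->] := he n; [exact: sub_atoms_meas hF _ _ DA|].
apply: bigcupT_measurable => n.
by have [[DA _]|->] := he n; [exact: sub_atoms_meas hF _ _ DA|].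
Qed.

Lemma int_part d (T : measurableType d) (R : realType) (mu : {measure set T -> \bar R})
  (D : int -> set (set T)) : is_filtration mu D ->
  forall m (I : set T) (f : T -> \bar R), D m I -> measurable_fun I f -> (forall x, I x -> 0 <= f x) ->
  \int[mu]_(x in I) f x = \esum_(J in sub_atoms D m I) \int[mu]_(x in J) f x.
Proof.
move=> hF m I f DI mf f0.
pose phi A := \int[mu]_(x in A) f x.
rewrite -/(phi I) -{1}(sub_atoms_cover hF DI).
apply: (@esum_partition _ _ _ phi).
- exact: sub_atoms_countable hF m I.
- exact: sub_atoms_disj hF m I.
- exact: integral_set0.
- move=> A [DA AI]; apply: integral_ge0 => x Ax; exact: f0 (AI _ Ax).
move=> e he te.
have em n : measurable (e n).
  by have [[DA _]|->] := he n; [exact: sub_atoms_meas hF _ _ DA|].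
have eI : \bigcup_n e n `<=` I.
  by move=> x [n _]; have [[_ AI]|->] := he n; [exact: AI|].
rewrite /phi ge0_integral_bigcup //.
- apply: measurable_funS mf => //; exact: sub_atoms_meas hF _ _ DI.
- by move=> x /eI; exact: f0.
Qed.

Lemma esumZ0 (R : realType) (T : choiceType) (I : set T) (a : T -> \bar R) (r : R) :
  (0 <= r)%R -> (forall i, I i -> 0 <= a i) ->
  \esum_(i in I) (r%:E * a i) = r%:E * \esum_(i in I) a i.
Proof.
rewrite le0r => /orP[/eqP ->|r0] a0; last exact: esumZ.
by rewrite mul0e; apply: esum1 => i _; rewrite mul0e.
Qed.

Lemma mu_fin d (T : measurableType d) (R : realType) (mu : {measure set T -> \bar R})
  (D : int -> set (set T)) : is_filtration mu D ->
  forall n I, D n I -> mu I = (fine (mu I))%:E /\ (0 < fine (mu I))%R.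
Proof.
move=> [[_ hp _ _ _] _] n I /hp [_ h0 hoo].
have hf : mu I \is a fin_num by rewrite ge0_fin_numE // ltW.
by split; [rewrite fineK|rewrite -lte_fin fineK].
Qed.

Lemma avgE d (T : measurableType d) (R : realType) (mu : {measure set T -> \bar R})
  (D : int -> set (set T)) : is_filtration mu D ->
  forall n I (f : T -> \bar R), D n I -> mu.-integrable I f -> (forall x, 0 <= f x) ->
  \int[mu]_(x in I) f x = (avg mu f I * fine (mu I))%:E /\ (0 <= avg mu f I)%R.
Proof.
move=> hF n I f DI fi f0.
have mI := sub_atoms_meas hF DI.
have [_ mpos] := mu_fin hF DI.
have hf : \int[mu]_(x in I) f x \is a fin_num by exact: integrable_fin_num.
rewrite /avg divfK ?gt_eqF // fineK //; split => //.
apply: divr_ge0; last exact: ltW.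
by apply: fine_ge0; apply: integral_ge0.
Qed.

Lemma avg_zero_sub d (T : measurableType d) (R : realType) (mu : {measure set T -> \bar R})
  (D : int -> set (set T)) : is_filtration mu D ->
  forall n k I J (f : T -> \bar R), D n I -> D k J -> J `<=` I ->
  mu.-integrable I f -> mu.-integrable J f -> (forall x, 0 <= f x) ->
  avg mu f I = 0%R -> avg mu f J = 0%R.
Proof.
move=> hF n k I J f DI DJ JI fI fJ f0 h0.
have [eI _] := avgE hF DI fI f0.
have [eJ hJ] := avgE hF DJ fJ f0.
have [_ mJpos] := mu_fin hF DJ.
have mI := sub_atoms_meas hF DI.
have mJ := sub_atoms_meas hF DJ.
have : \int[mu]_(x in J) f x <= \int[mu]_(x in I) f x.
  apply: ge0_subset_integral => //; exact: measurable_int fI.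
rewrite eI eJ h0 mul0r lee_fin => hle.
apply/eqP; rewrite eq_le hJ andbT.
by nra.
Qed.

Lemma invw_ge0 T (R : realType) (w : T -> R) x : 0 <= invw w x.
Proof. by rewrite /invw; case: ifPn => // h; rewrite lee_fin invr_ge0 ltW. Qed.

Lemma Bf_ge0 (R : realType) (Q x y : R) : (0 <= x)%R -> (0 <= y)%R -> (x * y <= Q)%R ->
  (0 <= Bf Q x y)%R.
Proof.
move=> hx hy hQ; rewrite /Bf.
have : (0 <= 32 * Num.sqrt Q * Num.sqrt (x * y))%R.
  by apply: mulr_ge0; [apply: mulr_ge0 => //; exact: sqrtr_ge0|exact: sqrtr_ge0].
lra.
Qed.

Lemma Bf_le (R : realType) (Q x y : R) : (0 <= x)%R -> (0 <= y)%R -> (x * y <= Q)%R ->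
  (Bf Q x y <= 33 * Q)%R.
Proof.
move=> hx hy hQ; rewrite /Bf.
have hxy : (0 <= x * y)%R by exact: mulr_ge0.
have hS : (Num.sqrt (x * y) <= Num.sqrt Q)%R by exact: ler_wsqrtr.
have hS0 : (0 <= Num.sqrt (x * y))%R by exact: sqrtr_ge0.
have hQ0 : (0 <= Q)%R by lra.
have hSQ : (Num.sqrt Q * Num.sqrt Q = Q)%R by rewrite -expr2 sqr_sqrtr.
have : (Num.sqrt Q * Num.sqrt (x * y) <= Num.sqrt Q * Num.sqrt Q)%R.
  by apply: ler_wpM2l => //; exact: sqrtr_ge0.
lra.
Qed.

Lemma node_ineq d (T : measurableType d) (R : realType) (mu : {measure set T -> \bar R})
  (D : int -> set (set T)) (w : T -> R) :
  is_filtration mu D -> is_weight mu D w ->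
  (forall I, atoms D I -> mu.-integrable I (invw w)) ->
  forall Q : R, (forall I, atoms D I -> (avg mu (invw w) I * avg mu (EFin \o w) I <= Q)%R) ->
  forall m I, top D m I ->
  rho mu D w I * mu I + \esum_(J in sub_atoms D m I)
    (Bf Q (avg mu (invw w) J) (avg mu (EFin \o w) J) * fine (mu J))%:E
  <= (Bf Q (avg mu (invw w) I) (avg mu (EFin \o w) I) * fine (mu I))%:E.
Proof.
move=> hF hW hU Q hQ m I tI.
have DI : D m I by case: tI.
have aI : atoms D I by exists m.
have aJ J : sub_atoms D m I J -> atoms D J by move=> [DJ _]; exists (m + 1)%R.
have u0 : forall x, 0 <= invw w x by move=> x; exact: invw_ge0.
have w0 : forall x, 0 <= (EFin \o w) x by move=> x; rewrite lee_fin; case: hW => h _; exact: h.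
have wi J : atoms D J -> mu.-integrable J (EFin \o w) by case: hW => _ h; exact: h.
have [muI mIpos] := mu_fin hF DI.
have [eIu hx] := avgE hF DI (hU I aI) u0.
have [eIw hy] := avgE hF DI (wi I aI) w0.
have [al [be [hal hbe H]]] := child_ineq hx hy (hQ I aI).
set x := avg mu (invw w) I in eIu hx H *.
set y := avg mu (EFin \o w) I in eIw hy H *.
set mI := fine (mu I) in muI mIpos eIu eIw *.
pose xJ J := avg mu (invw w) J.
pose yJ J := avg mu (EFin \o w) J.
pose BJ J := Bf Q (xJ J) (yJ J).
pose t J := (`|xJ J - x| * `|yJ J - y| * fine (mu J))%R.
have key J : sub_atoms D m I J ->
  (t J + BJ J * fine (mu J) + (al * x + be * y) * fine (mu J)
   <= Bf Q x y * fine (mu J) + (al * (xJ J * fine (mu J)) + be * (yJ J * fine (mu J))))%R.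
  move=> sJ; have [DJ JI] := sJ.
  have [_ mJpos] := mu_fin hF DJ.
  have [_ hxJ] := avgE hF DJ (hU J (aJ J sJ)) u0.
  have [_ hyJ] := avgE hF DJ (wi J (aJ J sJ)) w0.
  have hh := H _ _ hxJ hyJ
    (fun h => avg_zero_sub hF DI DJ JI (hU I aI) (hU J (aJ _ sJ)) u0 h)
    (fun h => avg_zero_sub hF DI DJ JI (wi I aI) (wi J (aJ _ sJ)) w0 h).
  have := ler_wpM2r (ltW mJpos) hh.
  rewrite /t /BJ /xJ /yJ; lra.
have mI_ : measurable I := sub_atoms_meas hF DI.
have mJE J : sub_atoms D m I J -> mu J = (fine (mu J))%:E.
  by move=> [DJ _]; have [-> _] := mu_fin hF DJ.
have mJ0 J : sub_atoms D m I J -> (0 <= fine (mu J))%R.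
  by move=> [DJ _]; have [_ /ltW] := mu_fin hF DJ.
have xJ0 J : sub_atoms D m I J -> (0 <= xJ J)%R.
  by move=> sJ; have [DJ _] := sJ; have [_ h] := avgE hF DJ (hU J (aJ J sJ)) u0.
have yJ0 J : sub_atoms D m I J -> (0 <= yJ J)%R.
  by move=> sJ; have [DJ _] := sJ; have [_ h] := avgE hF DJ (wi J (aJ J sJ)) w0.
have xE J : sub_atoms D m I J -> \int[mu]_(z in J) invw w z = (xJ J * fine (mu J))%:E.
  by move=> sJ; have [DJ _] := sJ; have [h _] := avgE hF DJ (hU J (aJ J sJ)) u0.
have yE J : sub_atoms D m I J -> \int[mu]_(z in J) (EFin \o w) z = (yJ J * fine (mu J))%:E.
  by move=> sJ; have [DJ _] := sJ; have [h _] := avgE hF DJ (wi J (aJ J sJ)) w0.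
have t0 J : sub_atoms D m I J -> 0 <= (t J)%:E.
  move=> sJ; rewrite lee_fin /t; apply: mulr_ge0; [exact: mulr_ge0|exact: mJ0].
have B0 J : sub_atoms D m I J -> 0 <= (BJ J * fine (mu J))%:E.
  move=> sJ; rewrite lee_fin; apply: mulr_ge0; last exact: mJ0.
  by apply: Bf_ge0; [exact: xJ0|exact: yJ0|exact: hQ (aJ J sJ)].
have c0 : (0 <= al * x + be * y)%R by apply: addr_ge0; exact: mulr_ge0.
have BI0 : (0 <= Bf Q x y)%R by exact: Bf_ge0 hx hy (hQ I aI).
have rhoE : rho mu D w I * mu I = \esum_(J in sub_atoms D m I) (t J)%:E.
  rewrite /rho (children_top hF tI) muI muleC -esumZ //; last first.
    move=> J sJ; rewrite lee_fin; apply: divr_ge0; last exact: ltW.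
    apply: mulr_ge0; [exact: mulr_ge0|exact: mJ0].
  apply: eq_esum => J sJ; rewrite -EFinM /t /xJ /yJ -/x -/y; congr EFin.
  by rewrite /=; field; rewrite gt_eqF.
have hle : \esum_(J in sub_atoms D m I)
    ((t J)%:E + (BJ J * fine (mu J))%:E + ((al * x + be * y) * fine (mu J))%:E)
  <= \esum_(J in sub_atoms D m I) ((Bf Q x y * fine (mu J))%:E
       + (al%:E * \int[mu]_(z in J) invw w z + be%:E * \int[mu]_(z in J) (EFin \o w) z)).
  apply: le_esum => J sJ; rewrite (xE J sJ) (yE J sJ) -!EFinM -!EFinD lee_fin.
  exact: key J sJ.
have hmu : \esum_(J in sub_atoms D m I) mu J = (fine (mu I))%:E.
  by rewrite -muI (mu_part hF DI).
have LE : \esum_(J in sub_atoms D m I)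
    ((t J)%:E + (BJ J * fine (mu J))%:E + ((al * x + be * y) * fine (mu J))%:E)
  = \esum_(J in sub_atoms D m I) (t J)%:E + \esum_(J in sub_atoms D m I) (BJ J * fine (mu J))%:E
    + ((al * x + be * y) * mI)%:E.
  rewrite esumD //; last first.
    by move=> J sJ; rewrite lee_fin; apply: mulr_ge0 => //; exact: mJ0.
    by move=> J sJ; apply: adde_ge0; [exact: t0|exact: B0].
  rewrite esumD //; congr (_ + _).
  rewrite (eq_esum (b := fun J => (al * x + be * y)%:E * mu J)); last first.
    by move=> J sJ; rewrite (mJE J sJ) -EFinM.
  by rewrite esumZ0 // hmu -EFinM.
have RE : \esum_(J in sub_atoms D m I) ((Bf Q x y * fine (mu J))%:E
       + (al%:E * \int[mu]_(z in J) invw w z + be%:E * \int[mu]_(z in J) (EFin \o w) z))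
  = (Bf Q x y * mI)%:E + (al * (x * mI) + be * (y * mI))%:E.
  have i0 J (f : T -> \bar R) : (forall z, 0 <= f z) -> 0 <= \int[mu]_(z in J) f z.
    by move=> f0; apply: integral_ge0 => z _.
  rewrite esumD //; last first.
    by move=> J sJ; apply: adde_ge0; apply: mule_ge0; rewrite ?lee_fin //; apply: i0.
    by move=> J sJ; rewrite lee_fin; apply: mulr_ge0 => //; exact: mJ0.
  rewrite esumD //; last first.
    by move=> J sJ; apply: mule_ge0; rewrite ?lee_fin //; apply: i0.
    by move=> J sJ; apply: mule_ge0; rewrite ?lee_fin //; apply: i0.
  rewrite esumZ0 //; last by move=> J _; apply: i0.
  rewrite esumZ0 //; last by move=> J _; apply: i0.
  rewrite -(int_part hF DI (measurable_int _ (hU I aI)) (fun z _ => u0 z)).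
  rewrite -(int_part hF DI (measurable_int _ (wi I aI)) (fun z _ => w0 z)).
  rewrite eIu eIw -!EFinM -EFinD; congr (_ + _).
  rewrite (eq_esum (b := fun J => (Bf Q x y)%:E * mu J)); last first.
    by move=> J sJ; rewrite (mJE J sJ) -EFinM.
  by rewrite esumZ0 // hmu -EFinM.
rewrite LE RE in hle.
rewrite rhoE -(@leeD2rE _ ((al * x + be * y) * mI)%:E) //.
apply: (le_trans hle); rewrite -EFinD lee_fin; lra.
Qed.
Lemma level_step d (T : measurableType d) (R : realType) (mu : {measure set T -> \bar R})
  (D : int -> set (set T)) (w : T -> R) :
  is_filtration mu D -> is_weight mu D w ->
  (forall I, atoms D I -> mu.-integrable I (invw w)) ->
  forall Q : R, (forall I, atoms D I -> (avg mu (invw w) I * avg mu (EFin \o w) I <= Q)%R) ->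
  forall n0 I0, D n0 I0 ->
  let Phi J := (Bf Q (avg mu (invw w) J) (avg mu (EFin \o w) J) * fine (mu J))%:E in
  let L (k : nat) := [set J | D (n0 + k%:Z)%R J /\ J `<=` I0] in
  forall k : nat,
  \esum_(J in L k `&` top D (n0 + k%:Z)%R) (rho mu D w J * mu J)
  + \esum_(J in L k.+1) Phi J <= \esum_(J in L k) Phi J.
Proof.
move=> hF hW hU Q hQ n0 I0 DI0 Phi L k.
set m := (n0 + k%:Z)%R.
have eK : (n0 + k.+1%:Z = m + 1)%R by rewrite /m; lia.
have Phi0 J : atoms D J -> 0 <= Phi J.
  move=> aJ; have [DJn] := aJ; move=> DJ.
  have [_ hm] := mu_fin hF DJ.
  have u0 : forall x, 0 <= invw w x by move=> x; exact: invw_ge0.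
  have w0 : forall x, 0 <= (EFin \o w) x by move=> x; rewrite lee_fin; case: hW => h _; exact: h.
  have [_ hx] := avgE hF DJ (hU J aJ) u0.
  have [_ hy] := avgE hF DJ (hW.2 J aJ) w0.
  rewrite /Phi lee_fin; apply: mulr_ge0; last exact: ltW.
  exact: Bf_ge0 hx hy (hQ J aJ).
have DL I : L k I -> D m I /\ I `<=` I0 by [].
have S1 : \esum_(J in L k.+1) Phi J =
          \esum_(I in L k) \esum_(J in sub_atoms D m I) Phi J.
  rewrite esum_esum; last first.
    by move=> I J _ [DJ _]; apply: Phi0; exists (m + 1)%R.
  apply: reindex_esum; split.
  - move=> [I J] /= [[DI II0] [DJ JI]]; rewrite /L /= eK; split => //.
    exact: subset_trans JI II0.
  - move=> [I J] [I' J']; rewrite !inE /= => -[[DI _] [DJ JI]] [[DI' _] [_ J'I']] /= eJ.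
    subst J'; have [x Jx] := Dne hF DJ.
    by rewrite (same_atom hF DI DI' (JI _ Jx) (J'I' _ Jx)).
  - move=> J; rewrite /L /= eK => -[DJ JI0].
    have [[_ _ _ _ hn] _] := hF.
    have [K [DK JK]] := hn _ _ DJ.
    have [x Jx] := Dne hF DJ.
    have KI0 : K `<=` I0.
      by apply: (meet_sub hF _ DI0 DK (JI0 _ Jx) (JK _ Jx)); rewrite /m; lia.
    by exists (K, J).
have rho0 I : atoms D I -> 0 <= rho mu D w I * mu I.
  move=> _; apply: mule_ge0 => //; apply: esum_ge0 => J _.
  rewrite lee_fin; apply: mulr_ge0; [apply: mulr_ge0; [exact: mulr_ge0|]|].
  - exact: fine_ge0.
  - by rewrite invr_ge0; exact: fine_ge0.
rewrite S1 esum_mkcondr -esumD; first last.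
- by move=> I [DI _]; apply: esum_ge0 => J [DJ _]; apply: Phi0; exists (m + 1)%R.
- by move=> I [DI _]; case: ifPn => // _; apply: rho0; exists m.
apply: le_esum => I LI.
have [DI II0] := LI.
case: ifPn => [/set_mem tI | ntI].
  by move: (node_ineq hF hW hU) => /(_ Q hQ m I tI).
have Dm1 : D (m + 1)%R I.
  have [j [mj Dj]] : exists j, (m < j)%R /\ D j I.
    apply: contrapT => hne; move/negP: ntI; apply; rewrite inE; split => // j mj Dj.
    by apply: hne; exists j.
  by apply: (contig hF (m := m) (k := j)) => //; lia.
have subE : sub_atoms D m I = [set I].
  apply/seteqP; split => J.
    move=> [DJ JI]; have [x Jx] := Dne hF DJ.
    exact: (same_atom hF DJ Dm1 Jx (JI _ Jx)).
  by move=> ->; split.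
rewrite subE esum_set1; last by apply: Phi0; exists m.
by rewrite add0e.
Qed.

Lemma absz_add (n m : int) : (n <= m)%R -> (n + `|m - n|%N%:Z = m)%R.
Proof. lia. Qed.

Lemma addz_nat_inj (n : int) (k k' : nat) : (n + k%:Z = n + k'%:Z)%R -> k = k'.
Proof. lia. Qed.

Lemma main_bound d (T : measurableType d) (R : realType) (mu : {measure set T -> \bar R})
  (D : int -> set (set T)) (w : T -> R) :
  is_filtration mu D -> is_weight mu D w ->
  (forall I, atoms D I -> mu.-integrable I (invw w)) ->
  forall Q : R, (forall I, atoms D I -> (avg mu (invw w) I * avg mu (EFin \o w) I <= Q)%R) ->
  forall n0 I0, D n0 I0 ->
  \esum_(I in [set I | atoms D I /\ I `<=` I0]) (rho mu D w I * mu I)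
  <= (Bf Q (avg mu (invw w) I0) (avg mu (EFin \o w) I0) * fine (mu I0))%:E.
Proof.
move=> hF hW hU Q hQ n0 I0 DI0.
pose Phi J := (Bf Q (avg mu (invw w) J) (avg mu (EFin \o w) J) * fine (mu J))%:E.
pose L (k : nat) := [set J | D (n0 + k%:Z)%R J /\ J `<=` I0].
pose E k := \esum_(J in L k `&` top D (n0 + k%:Z)%R) (rho mu D w J * mu J).
pose S k := \esum_(J in L k) Phi J.
have step k : E k + S k.+1 <= S k by exact: (level_step hF hW hU hQ DI0 k).
have rho0 I : 0 <= rho mu D w I * mu I.
  apply: mule_ge0 => //; apply: esum_ge0 => J _.
  rewrite lee_fin; apply: mulr_ge0; [apply: mulr_ge0; [exact: mulr_ge0|]|].
  - exact: fine_ge0.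
  - by rewrite invr_ge0; exact: fine_ge0.
have Phi0 J : atoms D J -> 0 <= Phi J.
  move=> aJ; have [DJn] := aJ; move=> DJ.
  have [_ hm] := mu_fin hF DJ.
  have u0 : forall x, 0 <= invw w x by move=> x; exact: invw_ge0.
  have w0 : forall x, 0 <= (EFin \o w) x by move=> x; rewrite lee_fin; case: hW => h _; exact: h.
  have [_ hx] := avgE hF DJ (hU J aJ) u0.
  have [_ hy] := avgE hF DJ (hW.2 J aJ) w0.
  rewrite /Phi lee_fin; apply: mulr_ge0; last exact: ltW.
  exact: Bf_ge0 hx hy (hQ J aJ).
have E0 k : 0 <= E k by apply: esum_ge0 => J _.
have S0 k : 0 <= S k by apply: esum_ge0 => J [DJ _]; apply: Phi0; exists (n0 + k%:Z)%R.
have tele k : \sum_(0 <= i < k) E i + S k <= S 0%N.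
  elim: k => [|k IH]; first by rewrite big_geq // add0e.
  rewrite big_nat_recr //= -addeA; apply: le_trans IH; apply: leeD2l; exact: step.
have SL0 : S 0%N = Phi I0.
  rewrite /S; have -> : L 0%N = [set I0].
    apply/seteqP; split => J; rewrite /L addr0.
      move=> [DJ JI]; have [x Jx] := Dne hF DJ.
      exact: (same_atom hF DJ DI0 Jx (JI _ Jx)).
    by move=> ->; split.
  by rewrite esum_set1 //; apply: Phi0; exists n0.
have ser : \sum_(0 <= i <oo) E i <= Phi I0.
  apply: lime_le; first exact: is_cvg_nneseries (fun n _ _ => E0 n).
  apply: nearW => k; rewrite -SL0; apply: le_trans (tele k).
  exact: leeDl.
apply: le_trans ser.
rewrite (esumID [set I | exists m, top D m I]); last by move=> I _; exact: rho0.
have -> : \esum_(I in [set I | atoms D I /\ I `<=` I0] `&` ~` [set I | exists m, top D m I])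
           (rho mu D w I * mu I) = 0.
  apply: esum1 => I [[aI _] nB].
  have [inf|[m tm]] := top_or_inf hF aI; last by exfalso; apply: nB; exists m.
  rewrite /rho (children_inf inf) esum1 ?mul0e // => J ->.
  by rewrite !subrr normr0 !mul0r.
rewrite adde0.
pose P' := [set: nat] `*`` (fun k => L k `&` top D (n0 + k%:Z)%R).
have sub : [set I | atoms D I /\ I `<=` I0] `&` [set I | exists m, top D m I] `<=` snd @` P'.
  move=> I [[aI II0] [m tm]].
  have DI : D m I by case: tm.
  have n0m : (n0 <= m)%R.
    rewrite leNgt; apply/negP => mn0.
    have [K [DK I0K]] := nest_le hF (ltW mn0) DI0.
    have [x Ix] := Dne hF DI.
    have KI := same_atom hF DI DK Ix (I0K _ (II0 _ Ix)).
    have I0I : I0 = I by apply/seteqP; split => // y /I0K; rewrite -KI.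
    by case: tm => _ /(_ n0 mn0); rewrite -I0I.
  exists (`|m - n0|%N, I) => //.
  rewrite /P' /L /= absz_add //; split => //.
have h := @esum_le_subset _ _ _ _ (fun I => rho mu D w I * mu I) sub (fun I _ => rho0 I).
apply: (le_trans h).
rewrite nneseries_esumT // /E esum_esum; last by move=> *; exact: rho0.
rewrite esum_image; last first.
  move=> [k I] [k' I']; rewrite !inE /= => -[_ [_ tk]] [_ [_ tk']] /= eI.
  subst I'; have := top_uniq tk tk'.
  by move=> /addz_nat_inj e; congr pair; exact: e.
by [].
Qed.


Local Close Scope ereal_scope.

Theorem lemma4p5 :
  exists C : nat,
  forall (R : realType) (d : measure_display) (T : measurableType d)
    (mu : {measure set T -> \bar R}) (D : int -> set (set T)) (w : T -> R),
    sigma_finite setT mu ->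
    is_filtration mu D ->
    is_weight mu D w ->
    (* [w]_{A_2} finite; in particular <w^{-1}>_I < oo for every atom I *)
    (forall I, atoms D I -> mu.-integrable I (invw w)) ->
    (A2 mu D w < +oo)%E ->
    forall I0, atoms D I0 ->
      (\esum_(I in [set I | atoms D I /\ I `<=` I0]) (rho mu D w I * mu I)
       <= (C%:R)%:E * A2 mu D w * mu I0)%E.
Proof.
exists 33%N => R d T mu D w _ hF hW hU hA I0 aI0.
have [n0 DI0] := aI0.
have u0 : forall x, (0 <= invw w x)%E by move=> x; exact: invw_ge0.
have w0 : forall x, (0 <= (EFin \o w) x)%E by move=> x; rewrite lee_fin; case: hW => h _; exact: h.
have pos I : atoms D I -> (0 <= avg mu (invw w) I)%R /\ (0 <= avg mu (EFin \o w) I)%R.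
  move=> aI; have [n DI] := aI.
  have [_ h1] := avgE hF DI (hU I aI) u0.
  have [_ h2] := avgE hF DI (hW.2 I aI) w0.
  by [].
have ub I : atoms D I ->
    ((avg mu (EFin \o w) I * avg mu (invw w) I)%:E <= A2 mu D w)%E.
  by move=> aI; apply: ereal_sup_ubound; exists I.
have A2ge0 : (0 <= A2 mu D w)%E.
  apply: le_trans (ub I0 aI0); rewrite lee_fin.
  by have [h1 h2] := pos I0 aI0; exact: mulr_ge0.
set Q := fine (A2 mu D w).
have A2E : A2 mu D w = Q%:E by rewrite fineK // ge0_fin_numE.
have hQ I : atoms D I -> (avg mu (invw w) I * avg mu (EFin \o w) I <= Q)%R.
  by move=> aI; rewrite mulrC -lee_fin -A2E; exact: ub.
move: (main_bound hF hW hU) => /(_ Q hQ n0 I0 DI0) main.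
apply: (le_trans main).
have [muI0 mpos] := mu_fin hF DI0.
rewrite A2E muI0 -!EFinM lee_fin.
have [h1 h2] := pos I0 aI0.
have := Bf_le h1 h2 (hQ I0 aI0).
move=> hB; apply: ler_wpM2r; first exact: ltW.
by rewrite -natr1 // ; lra.
Qed.
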